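(* Let $\mathcal{A}$ be a finite set of players and $\mathcal{R}$ a finite set of resources. Each player $i\in\mathcal{A}$ has a finite set $\Gamma_i$ of strategies (trajectories), and each $\gamma_i\in\Gamma_i$ determines a set $\gamma_i^{\mathrm{cg}}\subseteq\mathcal{R}$ of used resources. For a joint strategy $\gamma=(\gamma_i)_{i\in\mathcal{A}}\in\Gamma=\prod_i\Gamma_i$, the load of $r\in\mathcal{R}$ is $l_r(\gamma)=\sum_{i\in\mathcal{A}}\mathbf{1}[r\in\gamma_i^{\mathrm{cg}}]$. Each resource $r$ has a cost function $J_r:\mathbb{N}\to\mathbb{R}$ which is a polynomial with non-negative coefficients and degree at most $d\in\mathbb{N}$. Player $i$'s cost is $J_i(\gamma)=J_i^{\mathrm{cg}}(\gamma)+J_i^{\mathrm{per}}(\gamma_i)$, where $J_i^{\mathrm{cg}}(\gamma)=\sum_{r\in\gamma_i^{\mathrm{cg}}}J_r(l_r(\gamma))$ and $J_i^{\mathrm{per}}:\Gamma_i\to\mathbb{R}_{\ge 0}$ is a personal cost depending only on $\gamma_i$. Let $C(\gamma)=\sum_{i}J_i(\gamma)$, let $\Gamma_{\mathrm{NE}}$ be the set of pure Nash equilibria, $\Gamma^\star=\arg\min_{\gamma\in\Gamma}C(\gamma)$, and $\mathrm{PoA}=\max_{\gamma\in\Gamma_{\mathrm{NE}}}C(\gamma)/\min_{\gamma\in\Gamma}C(\gamma)$. Let $\alpha^\star\in\mathbb{R}_{\ge0}$ be the largest constant such that $J_i^{\mathrm{per}}(\gamma_i)\ge\alpha^\star J_i^{\mathrm{cg}}(\gamma)$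 for all $i\in\mathcal{A}$ and all $\gamma\in\Gamma_{\mathrm{NE}}\cup\Gamma^\star$. Let $\Psi_{d,\alpha^\star}$ be the positive real solution of $x^{d+1}+\alpha^\star x^{d+1}=(x+1)^d+\alpha^\star$ and $k=\lfloor\Psi_{d,\alpha^\star}\rfloor$. Then $$\mathrm{PoA}\le\frac{(k+1)^{2d+1}-k^{d+1}(k+2)^d+\alpha^\star\left((k+1)^{d+1}-k^{d+1}\right)}{(1+\alpha^\star)\left((k+1)^{d+1}-k^{d+1}\right)-(k+2)^d+(k+1)^d}.$$
   Context: This models urban driving games as congestion games: resources are cells of a discretization of the road in space, time and ''proximity levels'', and a trajectory uses the resources corresponding to its (inflated) spatio-temporal occupancy. Costs are assumed positive (non-negative). A pure Nash equilibrium is a $\gamma$ with $J_i(\gamma)\le J_i(\gamma_i',\gamma_{-i})$ for all $i$ and all $\gamma_i'\in\Gamma_i$. *)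

(* Defs.v *)
From mathcomp Require Import all_boot all_order all_algebra.
Set Implicit Arguments. Unset Strict Implicit. Unset Printing Implicit Defensive.
Import Order.TTheory GRing.Theory Num.Theory.
Local Open Scope ring_scope.

Section CongestionGame.
Variables (R : realFieldType) (A Res : finType) (T : A -> finType).
Variable used : forall i : A, T i -> {set Res}.
Variable Jr : Res -> {poly R}.
Variable Jper : forall i : A, T i -> R.

Definition profile := forall i : A, T i.

Definition load (r : Res) (g : profile) : nat :=
  (\sum_(i : A) (r \in used (g i)))%N.

Definition Jcg (i : A) (g : profile) : R :=
  \sum_(r in used (g i)) (Jr r).[(load r g)%:R].

Definition Jcost (i : A) (g : profile) : R := Jcg i g + Jper (g i).

Definition Csoc (g : profile) : R := \sum_(i : A) Jcost i g.

Definition isNE (g : profile) : Prop :=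
  forall (i : A) (x : T i), Jcost i g <= Jcost i (dfwith g x).

Definition isOpt (g : profile) : Prop := forall g' : profile, Csoc g <= Csoc g'.

Definition alpha_ok (alpha : R) : Prop :=
  forall (i : A) (g : profile), (isNE g \/ isOpt g) -> alpha * Jcg i g <= Jper (g i).

End CongestionGame.

Definition poa_bound (R : realFieldType) (d k : nat) (alpha : R) : R :=
  ((k.+1%:R) ^+ (2 * d + 1) - (k%:R) ^+ d.+1 * (k.+2%:R) ^+ d
     + alpha * ((k.+1%:R) ^+ d.+1 - (k%:R) ^+ d.+1))
  / ((1 + alpha) * ((k.+1%:R) ^+ d.+1 - (k%:R) ^+ d.+1)
     - (k.+2%:R) ^+ d + (k.+1%:R) ^+ d).

(* Main.v *)
Require Import Defs.
From mathcomp Require Import all_boot all_order all_algebra.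
From mathcomp Require Import ring lra.
Import Order.TTheory GRing.Theory Num.Theory.
Local Open Scope ring_scope.

Section Arith.
Variable R : realFieldType.

Lemma expr_split (x : R) n i : (i <= n)%N -> x ^+ n = x ^+ (n - i) * x ^+ i.
Proof. by move=> h; rewrite -exprD subnK. Qed.

Lemma lemN (w : R) n : 0 <= w ->
  ((w+3)^+n - (w+2)^+n) * (w+1)^+n.-1 <= (w+2)^+n.-1 * ((w+2)^+n - (w+1)^+n).
Proof.
move=> w0.
rewrite subrXX (subrXX (w+2)).
have -> : w + 3 - (w + 2) = 1 by ring.
have -> : w + 2 - (w + 1) = 1 by ring.
rewrite !mul1r mulr_suml mulr_sumr; apply: ler_sum => [[i hi]] _ /=.
have hi' : (i <= n.-1)%N by rewrite -ltnS; case: n hi => //.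
rewrite (expr_split (w+1) _ _ hi') (expr_split (w+2) _ _ hi').
set a := (n.-1 - i)%N.
have -> : (w + 3) ^+ a * (w + 2) ^+ i * ((w + 1) ^+ a * (w + 1) ^+ i)
   = (((w+3)*(w+1)) ^+ a) * ((w + 2) ^+ i * (w + 1) ^+ i) by rewrite exprMn; ring.
have -> : (w + 2) ^+ a * (w + 2) ^+ i * ((w + 2) ^+ a * (w + 1) ^+ i)
   = (((w+2)*(w+2)) ^+ a) * ((w + 2) ^+ i * (w + 1) ^+ i) by rewrite exprMn; ring.
apply: ler_wpM2r; first by apply: mulr_ge0; apply: exprn_ge0; lra.
apply: lerXn2r; rewrite ?nnegrE; nra.
Qed.

Lemma lemM (w : R) n : 0 <= w ->
  (w+2)^+n * ((w+1)^+n.+1 - w^+n.+1) <= (w+1)^+n * ((w+2)^+n.+1 - (w+1)^+n.+1).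
Proof.
move=> w0.
rewrite subrXX (subrXX (w+2)).
have -> : w + 1 - w = 1 by ring.
have -> : w + 2 - (w + 1) = 1 by ring.
rewrite !mul1r mulr_sumr mulr_sumr; apply: ler_sum => [[i hi]] _ /=.
have hi' : (i <= n)%N by [].
rewrite (expr_split (w+2) _ _ hi') (expr_split (w+1) _ _ hi').
set a := (n - i)%N.
have -> : (w + 2) ^+ a * (w + 2) ^+ i * ((w + 1) ^+ a * w ^+ i)
   = (((w+2)*w) ^+ i) * ((w + 2) ^+ a * (w + 1) ^+ a) by rewrite exprMn; ring.
have -> : (w + 1) ^+ a * (w + 1) ^+ i * ((w + 2) ^+ a * (w + 1) ^+ i)
   = (((w+1)*(w+1)) ^+ i) * ((w + 2) ^+ a * (w + 1) ^+ a) by rewrite exprMn; ring.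
apply: ler_wpM2r; first by apply: mulr_ge0; apply: exprn_ge0; lra.
apply: lerXn2r; rewrite ?nnegrE; nra.
Qed.
End Arith.

Section B.
Variable R : realFieldType.
Variable d : nat.

Definition PP (m : nat) : R := (m.+2%:R)^+d - (m.+1%:R)^+d.
Definition QQ (m : nat) : R := (m.+1%:R)^+d.+1 - (m%:R)^+d.+1.

Lemma natS1 m : m.+1%:R = m%:R + 1 :> R. Proof. by rewrite -addn1 natrD. Qed.
Lemma natS2 m : m.+2%:R = m%:R + 2 :> R. Proof. by rewrite -addn2 natrD. Qed.
Lemma natS3 m : m.+3%:R = m%:R + 3 :> R. Proof. by rewrite -addn3 natrD. Qed.

Lemma PP_ge0 m : 0 <= PP m.
Proof. rewrite /PP subr_ge0 lerXn2r ?nnegrE ?ler_nat //. Qed.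

Lemma QQ_gt0 m : 0 < QQ m.
Proof. rewrite /QQ subr_gt0 ltrXn2r ?ler0n ?ltr_nat //. Qed.

Lemma cons m : PP m.+1 * QQ m <= PP m * QQ m.+1.
Proof.
have w0 : 0 <= m%:R :> R by [].
have hN := @lemN R _ d w0. have hM := @lemM R _ d w0.
have ha := PP_ge0 m.+1. have hb := PP_ge0 m. have hc := QQ_gt0 m. have he := QQ_gt0 m.+1.
move: ha hb hc he hN hM; rewrite /PP /QQ (natS3 m) (natS2 m) (natS1 m).
set w := m%:R.
case: d => [|d'] /=; first by rewrite !expr0 !subrr !mul0r.
set a := (w + 3) ^+ d'.+1 - (w + 2) ^+ d'.+1.
set b := (w + 2) ^+ d'.+1 - (w + 1) ^+ d'.+1.
set c := (w + 1) ^+ d'.+2 - w ^+ d'.+2.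
set e := (w + 2) ^+ d'.+2 - (w + 1) ^+ d'.+2.
rewrite !(exprS _ d').
set s := (w + 1) ^+ d'. set t := (w + 2) ^+ d'.
move=> ha hb hc he hN hM.
have s0 : 0 < s by apply: exprn_gt0; lra.
have t0 : 0 < t by apply: exprn_gt0; lra.
have h1 : a * s * c * (w+2) <= t * b * c * (w+2).
  by apply: ler_wpM2r; [lra|apply: ler_wpM2r; lra].
have h2 : t * b * c * (w+2) <= b * ((w+1) * s * e).
  have -> : t * b * c * (w+2) = b * ((w + 2) * t * c) by ring.
  by apply: ler_wpM2l.
have h3 : b * ((w+1) * s * e) <= b * ((w+2) * s * e).
  apply: ler_wpM2l => //; apply: ler_wpM2r; first lra.
  apply: ler_wpM2r; lra.
have h4 : (a * c) * (s * (w+2)) <= (b * e) * (s * (w+2)).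
  have -> : (a * c) * (s * (w+2)) = a * s * c * (w+2) by ring.
  have -> : (b * e) * (s * (w+2)) = b * ((w+2) * s * e) by ring.
  lra.
by rewrite ler_pM2r in h4 => //; apply: mulr_gt0 => //; lra.
Qed.

Lemma anti m i : PP (m + i) * QQ m <= PP m * QQ (m + i).
Proof.
elim: i => [|i IH]; first by rewrite addn0.
have h := cons (m + i). rewrite -!addnS in h *.
have hq := QQ_gt0 (m + i). have hq1 := QQ_gt0 (m + i.+1). have hq0 := QQ_gt0 m.
have hp := PP_ge0 (m + i.+1).
have : PP (m + i.+1) * QQ m * QQ (m + i) <= PP m * QQ (m + i.+1) * QQ (m + i).
  have -> : PP (m + i.+1) * QQ m * QQ (m + i) = (PP (m + i.+1) * QQ (m + i)) * QQ m by ring.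
  have -> : PP m * QQ (m + i.+1) * QQ (m + i) = (PP m * QQ (m + i)) * QQ (m + i.+1) by ring.
  apply: le_trans (_ : PP (m + i) * QQ (m + i.+1) * QQ m <= _).
    by apply: ler_wpM2r => //; apply: ltW.
  have -> : PP (m + i) * QQ (m + i.+1) * QQ m = (PP (m + i) * QQ m) * QQ (m + i.+1) by ring.
  by apply: ler_wpM2r => //; apply: ltW.
by rewrite ler_pM2r.
Qed.
End B.

Section C.
Variable R : realFieldType.
Variables d k : nat.
Local Notation PP := (@PP R d).
Local Notation QQ := (@QQ R d).

Definition FF (n : nat) : R := PP k * ((n%:R)^+d.+1 - (k%:R)^+d.+1)
   - QQ k * ((n.+1%:R)^+d - (k.+1%:R)^+d).

Lemma Fstep n : FF n.+1 = FF n + (PP k * QQ n - QQ k * PP n).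
Proof. rewrite /FF /PP /QQ; ring. Qed.

Lemma F_up i : 0 <= FF (k + i).
Proof.
elim: i => [|i IH]; first by rewrite addn0 /FF !subrr !mulr0 subrr.
rewrite addnS Fstep; have := anti R d k i; lra.
Qed.

Lemma F_down i : (i <= k)%N -> 0 <= FF (k - i).
Proof.
elim: i => [|i IH] hi; first by rewrite subn0 -[k]addn0 F_up.
have hk : (k - i)%N = (k - i.+1).+1 by rewrite subnS prednK // subn_gt0.
have := IH (ltnW hi); rewrite hk Fstep.
have := anti R d (k - i.+1) i.+1.
have -> : (k - i.+1 + i.+1 = k)%N by rewrite subnK.
lra.
Qed.

Lemma F_ge0 n : 0 <= FF n.
Proof.
case: (leqP k n) => h.
  by rewrite -(subnKC h) F_up.
have -> : n = (k - (k - n))%N by rewrite subKn // ltnW.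
by apply: F_down; rewrite leq_subr.
Qed.

Definition LD : R := (k.+1%:R)^+(2*d+1) - (k%:R)^+d.+1 * (k.+2%:R)^+d.

Lemma LD_eq : LD = (k.+1%:R)^+d * QQ k - (k%:R)^+d.+1 * PP k.
Proof.
rewrite /LD /QQ /PP.
have -> : (2 * d + 1 = d + d.+1)%N by rewrite mul2n -addnn addn1 addnS.
rewrite exprD; ring.
Qed.

Lemma key1 n : QQ k * (n.+1%:R)^+d <= LD + PP k * (n%:R)^+d.+1.
Proof. have := F_ge0 n; rewrite LD_eq /FF; lra. Qed.

Lemma LD_ge : QQ k <= LD.
Proof. have := key1 0; rewrite expr1n mulr1 expr0n /= mulr0 addr0; done. Qed.

Lemma key2 n j : (j <= d)%N -> QQ k * (n.+1%:R)^+j <= LD + PP k * (n%:R)^+j.+1.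
Proof.
move=> hj.
have h1 := key1 n.
have q0 := QQ_gt0 R d k. have p0 := PP_ge0 R d k.
have l0 : 0 <= LD by have := LD_ge; lra.
set c := (n.+1%:R : R)^+(d - j).
have c1 : 1 <= c by apply: exprn_ege1; rewrite ler1n.
have c0 : 0 < c by lra.
rewrite -(ler_pM2r c0).
have e1 : (n.+1%:R : R)^+d = (n.+1%:R)^+j * c by rewrite /c -exprD subnKC.
have e2 : (n%:R : R)^+d.+1 <= (n%:R)^+j.+1 * c.
  rewrite /c -(subnKC hj) -addSn exprD subnKC //.
  rewrite ler_wpM2l ?exprn_ge0 // lerXn2r ?nnegrE ?ler_nat //.
have e3 : PP k * (n%:R)^+d.+1 <= PP k * ((n%:R)^+j.+1 * c) by apply: ler_wpM2l.
have e4 : LD <= LD * c by rewrite ler_peMr.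
rewrite e1 in h1.
have -> : QQ k * n.+1%:R ^+ j * c = QQ k * (n.+1%:R ^+ j * c) by ring.
have -> : (LD + PP k * n%:R ^+ j.+1) * c = LD * c + PP k * (n%:R ^+ j.+1 * c) by ring.
lra.
Qed.
End C.

Section D.
Variable R : realFieldType.
Variables d k : nat.
Local Notation PP := (@PP R d).
Local Notation QQ := (@QQ R d).
Local Notation LD := (@LD R d k).

Lemma mono_smooth x y j : (j <= d)%N ->
  QQ k * (y%:R * (x.+1%:R)^+j) <= LD * (y%:R)^+j.+1 + PP k * (x%:R)^+j.+1.
Proof.
move=> hj.
have q0 := QQ_gt0 R d k. have p0 := PP_ge0 R d k.
have l0 : 0 <= LD by have := LD_ge R d k; lra.
case: y => [|y'].
  rewrite mul0r mulr0 expr0n /= mulr0 add0r.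
  by apply: mulr_ge0 => //; apply: exprn_ge0.
set y := y'.+1.
have y0 : (0 < y)%N by [].
set n := (x %/ y)%N.
have h1 : (x.+1 <= n.+1 * y)%N by apply: ltn_ceil.
have h2 : (n * y <= x)%N by apply: leq_divM.
have yR : 0 <= y%:R :> R by [].
have e1 : QQ k * (y%:R * (x.+1%:R)^+j) <= QQ k * (y%:R * ((n.+1 * y)%:R)^+j).
  apply: ler_wpM2l; first lra.
  apply: ler_wpM2l => //; apply: lerXn2r; rewrite ?nnegrE ?ler_nat //.
have e2 := @key2 R d k n j hj.
have yj : 0 <= (y%:R : R)^+j.+1 by apply: exprn_ge0.
have e3 : (y%:R : R)^+j.+1 * (QQ k * (n.+1%:R)^+j) <= (y%:R)^+j.+1 * (LD + PP k * (n%:R)^+j.+1).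
  by apply: ler_wpM2l.
have e4 : PP k * ((n * y)%:R)^+j.+1 <= PP k * (x%:R)^+j.+1.
  apply: ler_wpM2l => //; apply: lerXn2r; rewrite ?nnegrE ?ler_nat //.
have E1 : QQ k * (y%:R * ((n.+1 * y)%:R)^+j) = (y%:R : R)^+j.+1 * (QQ k * (n.+1%:R)^+j).
  by rewrite natrM exprMn exprS; ring.
have E2 : (y%:R : R)^+j.+1 * (LD + PP k * (n%:R)^+j.+1) = LD * (y%:R)^+j.+1 + PP k * ((n * y)%:R)^+j.+1.
  by rewrite natrM exprMn; ring.
lra.
Qed.

Lemma poly_ge0 (p : {poly R}) a : (forall i, 0 <= p`_i) -> 0 <= a -> 0 <= p.[a].
Proof.
move=> hc ha; rewrite horner_coef; apply: sumr_ge0 => i _.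
by apply: mulr_ge0 => //; apply: exprn_ge0.
Qed.

Lemma poly_mono (p : {poly R}) a b : (forall i, 0 <= p`_i) -> 0 <= a -> a <= b -> p.[a] <= p.[b].
Proof.
move=> hc ha hab; rewrite !horner_coef; apply: ler_sum => i _.
apply: ler_wpM2l => //; apply: lerXn2r; rewrite ?nnegrE //; lra.
Qed.

Lemma poly_smooth (p : {poly R}) x y : (forall i, 0 <= p`_i) -> (size p <= d.+1)%N ->
  QQ k * (y%:R * p.[x.+1%:R]) <= LD * (y%:R * p.[y%:R]) + PP k * (x%:R * p.[x%:R]).
Proof.
move=> hc hs.
rewrite !(horner_coef_wide _ hs) !mulr_sumr -big_split /=; apply: ler_sum => [[i hi]] _ /=.
have hj : (i <= d)%N by [].
have := @mono_smooth x y i hj.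
have c0 := hc i.
move=> h.
have := ler_wpM2l c0 h.
rewrite !exprS.
move=> h'.
have -> : QQ k * (y%:R * (p`_i * x.+1%:R ^+ i)) = p`_i * (QQ k * (y%:R * x.+1%:R ^+ i)) by ring.
have -> : LD * (y%:R * (p`_i * y%:R ^+ i)) + PP k * (x%:R * (p`_i * x%:R ^+ i))
   = p`_i * (LD * (y%:R * y%:R ^+ i) + PP k * (x%:R * x%:R ^+ i)) by ring.
exact: h'.
Qed.
End D.

Section G.
Variable R : realFieldType.
Definition GG (d : nat) (a x : R) := (1 + a) * x ^+ d.+1 - a - (x + 1) ^+ d.

Lemma G_sign d (a P x : R) : 0 <= a -> 0 < P ->
  P ^+ d.+1 + a * P ^+ d.+1 = (P + 1) ^+ d + a -> 0 <= x ->
  (x <= P -> GG d a x <= 0) /\ (P < x -> 0 < GG d a x).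
Proof.
move=> a0 P0 hP x0.
have Pd0 : 0 < P ^+ d by apply: exprn_gt0.
have PP0 : 0 < P ^+ d.+1 by apply: exprn_gt0.
have key : P ^+ d.+1 * GG d a x =
   x * (x ^+ d * (P + 1) ^+ d) - P * ((x + 1) ^+ d * P ^+ d) + a * (x ^+ d.+1 - P ^+ d.+1).
  have h : (1 + a) * P ^+ d.+1 = (P + 1) ^+ d + a by rewrite -hP; ring.
  rewrite /GG !(exprS x) !(exprS P) in h *.
  have -> : P * P ^+ d * ((1 + a) * (x * x ^+ d) - a - (x + 1) ^+ d)
     = x * x ^+ d * ((1 + a) * (P * P ^+ d)) - a * (P * P ^+ d) - P * ((x + 1) ^+ d * P ^+ d) by ring.
  rewrite h; ring.
have xd0 : 0 <= x ^+ d by apply: exprn_ge0.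
have x10 : 0 < (x + 1) ^+ d by apply: exprn_gt0; lra.
have P10 : 0 < (P + 1) ^+ d by apply: exprn_gt0; lra.
split=> hx.
- have h1 : x ^+ d * (P + 1) ^+ d <= (x + 1) ^+ d * P ^+ d.
    rewrite -!exprMn; apply: lerXn2r; rewrite ?nnegrE; nra.
  have h2 : x ^+ d.+1 <= P ^+ d.+1 by apply: lerXn2r; rewrite ?nnegrE //; lra.
  have h3 : x * (x ^+ d * (P + 1) ^+ d) <= P * ((x + 1) ^+ d * P ^+ d).
    apply: le_trans (_ : x * ((x + 1) ^+ d * P ^+ d) <= _).
      by apply: ler_wpM2l.
    by apply: ler_wpM2r => //; apply: mulr_ge0; lra.
  have h4 : a * (x ^+ d.+1 - P ^+ d.+1) <= 0 by nra.
  have : P ^+ d.+1 * GG d a x <= P ^+ d.+1 * 0 by rewrite key mulr0; lra.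
  by rewrite ler_pM2l.
- have h1 : (x + 1) ^+ d * P ^+ d <= x ^+ d * (P + 1) ^+ d.
    rewrite -!exprMn; apply: lerXn2r; rewrite ?nnegrE; nra.
  have h2 : P ^+ d.+1 <= x ^+ d.+1 by apply: lerXn2r; rewrite ?nnegrE //; lra.
  have xd : 0 < x ^+ d by apply: exprn_gt0; lra.
  have h3 : P * ((x + 1) ^+ d * P ^+ d) < x * (x ^+ d * (P + 1) ^+ d).
    apply: le_lt_trans (_ : P * (x ^+ d * (P + 1) ^+ d) < _).
      by apply: ler_wpM2l => //; lra.
    by rewrite ltr_pM2r //; apply: mulr_gt0.
  have h4 : 0 <= a * (x ^+ d.+1 - P ^+ d.+1) by nra.
  have : P ^+ d.+1 * 0 < P ^+ d.+1 * GG d a x by rewrite key mulr0; lra.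
  by rewrite ltr_pM2l.
Qed.
End G.
Section Game.
Variables (R : realFieldType) (A Res : finType) (T : A -> finType).
Variable used : forall i : A, T i -> {set Res}.
Variable Jr : Res -> {poly R}.
Variable Jper : forall i : A, T i -> R.

Lemma sum_used (S : A -> {set Res}) (f : Res -> R) :
  \sum_(i : A) \sum_(r in S i) f r = \sum_(r : Res) ((\sum_(i : A) (r \in S i))%N)%:R * f r.
Proof.
under eq_bigr do rewrite big_mkcond /=.
rewrite exchange_big /=; apply: eq_bigr => r _.
rewrite natr_sum mulr_suml; apply: eq_bigr => i _.
by case: (r \in S i); rewrite ?mul1r ?mul0r.
Qed.

Lemma load_dfwith (g : profile T) (i : A) (x : T i) r :
  (load used r (dfwith g x) <= (load used r g).+1)%N.
Proof.
rewrite /load (bigD1 i) //= (bigD1 i (P := xpredT)) //= dfwith_in.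
have -> : (\sum_(j | j != i) (r \in used j (dfwith g x j)) = \sum_(j | j != i) (r \in used j (g j)))%N.
  by apply: eq_bigr => j hj; rewrite dfwith_out // eq_sym.
rewrite -addSn leq_add2r.
by case: (r \in used i x); case: (r \in used i (g i)).
Qed.

Hypothesis HJr_coef : forall (r : Res) (n : nat), 0 <= (Jr r)`_n.

Lemma NE_bound (g : profile T) (o : profile T) : isNE used Jr Jper g -> forall i,
  Jcost used Jr Jper i g <= \sum_(r in used i (o i)) (Jr r).[(load used r g).+1%:R] + Jper i (o i).
Proof.
move=> hNE i.
apply: le_trans (hNE i (o i)) _.
rewrite /Jcost /Jcg dfwith_in lerD2r; apply: ler_sum => r _.
apply: poly_mono => //; rewrite ler_nat; exact: load_dfwith.
Qed.

Lemma Jcg_ge0 i g : 0 <= Jcg used Jr i g.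
Proof. by apply: sumr_ge0 => r _; apply: poly_ge0. Qed.
End Game.

Theorem theorem1 (R : realFieldType) (A Res : finType) (T : A -> finType)
  (used : forall i : A, T i -> {set Res}) (Jr : Res -> {poly R})
  (Jper : forall i : A, T i -> R) (d : nat)
  (HT : forall i : A, (0 < #|T i|)%N)
  (HJr_coef : forall (r : Res) (n : nat), 0 <= (Jr r)`_n)
  (HJr_deg : forall r : Res, (size (Jr r) <= d.+1)%N)
  (HJper : forall (i : A) (x : T i), 0 <= Jper i x)
  (alpha : R) (Halpha0 : 0 <= alpha)
  (Halpha_ok : alpha_ok used Jr Jper alpha)
  (Halpha_max : forall beta : R, 0 <= beta -> alpha_ok used Jr Jper beta -> beta <= alpha)
  (Psi : R) (HPsi_pos : 0 < Psi)
  (HPsi : Psi ^+ d.+1 + alpha * Psi ^+ d.+1 = (Psi + 1) ^+ d + alpha)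
  (k : nat) (Hk : (k%:R <= Psi < k.+1%:R)) :
  forall g : profile T, isNE used Jr Jper g ->
  forall gopt : profile T, isOpt used Jr Jper gopt ->
  Csoc used Jr Jper g <= poa_bound d k alpha * Csoc used Jr Jper gopt.
Proof.
move=> g hNE o hOpt.
set Cg := \sum_(i : A) Jcg used Jr i g.
set Pg := \sum_(i : A) Jper i (g i).
set Co := \sum_(i : A) Jcg used Jr i o.
set Po := \sum_(i : A) Jper i (o i).
have hCg : Csoc used Jr Jper g = Cg + Pg by rewrite /Csoc /Jcost big_split.
have hCo : Csoc used Jr Jper o = Co + Po by rewrite /Csoc /Jcost big_split.
have Cg_eq : Cg = \sum_(r : Res) (load used r g)%:R * (Jr r).[(load used r g)%:R].
  by rewrite /Cg /Jcg (@sum_used R A Res (fun i => used i (g i))).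
have Co_eq : Co = \sum_(r : Res) (load used r o)%:R * (Jr r).[(load used r o)%:R].
  by rewrite /Co /Jcg (@sum_used R A Res (fun i => used i (o i))).
set S := \sum_(r : Res) (load used r o)%:R * (Jr r).[(load used r g).+1%:R].
have hNEs : Cg + Pg <= S + Po.
  rewrite -hCg /Csoc.
  apply: le_trans (_ : \sum_(i : A) (\sum_(r in used i (o i)) (Jr r).[(load used r g).+1%:R] + Jper i (o i)) <= _).
    by apply: ler_sum => i _; apply: NE_bound.
  by rewrite big_split /= (@sum_used R A Res (fun i => used i (o i))).
have q0 := QQ_gt0 R d k. have p0 := PP_ge0 R d k.
have hLD := LD_ge R d k.
have hsm : QQ R d k * S <= LD R d k * Co + PP R d k * Cg.
  rewrite /S Co_eq Cg_eq !mulr_sumr -big_split /=; apply: ler_sum => r _.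
  by apply: poly_smooth.
have hPg : alpha * Cg <= Pg.
  rewrite /Cg /Pg mulr_sumr; apply: ler_sum => i _; apply: Halpha_ok; by left.
have hPo : alpha * Co <= Po.
  rewrite /Co /Po mulr_sumr; apply: ler_sum => i _; apply: Halpha_ok; by right.
have Cg0 : 0 <= Cg by apply: sumr_ge0 => i _; apply: Jcg_ge0.
have Co0 : 0 <= Co by apply: sumr_ge0 => i _; apply: Jcg_ge0.
move/andP: Hk => [hk1 hk2].
have [G1 _] := @G_sign R d alpha Psi k%:R Halpha0 HPsi_pos HPsi (ler0n R k).
have [_ G2] := @G_sign R d alpha Psi k.+1%:R Halpha0 HPsi_pos HPsi (ler0n R k.+1).
have G1' := G1 hk1. have G2' := G2 hk2.
have hDen : (1 + alpha) * QQ R d k - PP R d k = @GG R d alpha k.+1%:R - @GG R d alpha k%:R.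
  by rewrite /GG -(natS1 R k.+1) -(natS1 R k) /QQ /PP; ring.
have Den0 : 0 < (1 + alpha) * QQ R d k - PP R d k by rewrite hDen; lra.
have -> : poa_bound d k alpha = (LD R d k + alpha * QQ R d k) / ((1 + alpha) * QQ R d k - PP R d k).
  by rewrite /poa_bound /LD /QQ /PP; congr (_ / _); ring.
rewrite hCg hCo mulrAC ler_pdivlMr //.
have h1 : 0 <= PP R d k * (Pg - alpha * Cg) by apply: mulr_ge0; lra.
have h2 : 0 <= (LD R d k - QQ R d k) * (Po - alpha * Co) by apply: mulr_ge0; lra.
have h4 : QQ R d k * (Cg + Pg) <= QQ R d k * (S + Po) by apply: ler_wpM2l; lra.
have h3 : 0 <= (1 + alpha) * (LD R d k * Co + PP R d k * Cg + QQ R d k * Po - QQ R d k * (Cg + Pg)).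
  by apply: mulr_ge0; lra.
lra.
Qed.
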